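(* Let $FD_{j,2}(\alpha,\lambda,n)$ be the number of partitions with perimeter $n$, largest part $\alpha$, exactly $\lambda$ parts, and exactly $j$ distinct part sizes appearing at least twice. Then, as formal power series, $$\sum_{\alpha,\lambda,n\geq 1}\sum_{j\geq 0} FD_{j,2}(\alpha,\lambda,n)\,x^\alpha y^\lambda z^j q^n=\frac{xyq\,(1-(1-z)yq)}{1-(x+y)q+(1-z)xy^2q^3}.$$
   Context: A partition is a finite nonincreasing sequence of positive integers (its parts); its size is not fixed. For a partition $\pi$ with largest part $\alpha(\pi)$ and number of parts $\lambda(\pi)$, its perimeter is $\alpha(\pi)+\lambda(\pi)-1$. (Note $FD_{j,2}(\alpha,\lambda,n)=0$ unless $n=\alpha+\lambda-1$.) *)

(* Defs.v *)
From mathcomp Require Import all_boot all_order all_algebra.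
Set Implicit Arguments. Unset Strict Implicit. Unset Printing Implicit Defensive.
Import GRing.Theory Num.Theory.

Definition is_partition (s : seq nat) : bool :=
  sorted geq s && all (fun k => 0 < k) s.

Definition largest_part (s : seq nat) : nat := foldr maxn 0 s.
Definition num_parts (s : seq nat) : nat := size s.
Definition perimeter (s : seq nat) : nat := largest_part s + num_parts s - 1.
Definition num_repeated_sizes (s : seq nat) : nat :=
  size (undup [seq k <- s | 1 < count_mem k s]).

(* A partition with lambda parts, all <= alpha, is encoded by a
   lambda.-tuple of elements of 'I_alpha.+1 (bijectively, via map val). *)
Definition FD2 (j a l n : nat) : nat :=
  #|[set t : l.-tuple 'I_a.+1 |
      let s := map val t in
      [&& is_partition s, largest_part s == a, num_parts s == l,
          perimeter s == n & num_repeated_sizes s == j]]|.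

(* Formal power series in x, y, z, q with integer coefficients:
   f a l j n is the coefficient of x^a y^l z^j q^n. *)
Definition ps := nat -> nat -> nat -> nat -> int.

Local Open Scope ring_scope.

Definition psmul (f g : ps) : ps := fun a l j n =>
  \sum_(i1 < a.+1) \sum_(i2 < l.+1) \sum_(i3 < j.+1) \sum_(i4 < n.+1)
     f i1 i2 i3 i4 * g (a - i1)%N (l - i2)%N (j - i3)%N (n - i4)%N.

Definition psadd (f g : ps) : ps := fun a l j n => f a l j n + g a l j n.

Definition mono (c : int) (a0 l0 j0 n0 : nat) : ps := fun a l j n =>
  if [&& a == a0, l == l0, j == j0 & n == n0] then c else 0.

Definition FDgf : ps := fun a l j n =>
  if [&& (0 < a)%N, (0 < l)%N & (0 < n)%N] then (FD2 j a l n)%:Z else 0.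

(* numerator  x y q (1 - (1 - z) y q) = xyq - x y^2 q^2 + z x y^2 q^2 *)
Definition numer : ps :=
  psadd (mono 1 1 1 0 1) (psadd (mono (-1) 1 2 0 2) (mono 1 1 2 1 2)).

(* denominator 1 - (x + y) q + (1 - z) x y^2 q^3 *)
Definition denom : ps :=
  psadd (mono 1 0 0 0 0)
  (psadd (mono (-1) 1 0 0 1)
  (psadd (mono (-1) 0 1 0 1)
  (psadd (mono 1 1 2 0 3) (mono (-1) 1 2 1 3)))).

(* Main.v *)
Require Import Defs.
From mathcomp Require Import all_boot all_order all_algebra zify.
Set Implicit Arguments. Unset Strict Implicit. Unset Printing Implicit Defensive.

Fixpoint parts (b l : nat) : seq (seq nat) :=
  if b is b'.+1 then parts b' l ++ [seq nseq (l - i) b ++ s | i <- iota 0 l, s <- parts b' i]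
  else if l is 0 then [:: [::]] else [::].

Definition ext b l := [seq nseq (l - i) b.+1 ++ s | i <- iota 0 l, s <- parts b i].
Lemma parts_S b l : parts b.+1 l = parts b l ++ ext b l.
Proof. by []. Qed.

Definition okp b l s := [&& sorted geq s, all (fun k => 0 < k <= b) s & size s == l].

Lemma geq_tr : transitive geq.
Proof. by move=> x y z /= h1 h2; apply: leq_trans h2 h1. Qed.

Lemma sorted_nseq_cat m c s : sorted geq s -> all (fun k => k <= c) s ->
  sorted geq (nseq m c ++ s).
Proof.
elim: m => [//|m IH] hs ha /=.
rewrite (path_sortedE geq_tr) IH // andbT all_cat ha andbT.
by apply/allP => x /nseqP [-> _] /=.
Qed.

Lemma decomp b s : sorted geq s -> all (fun k => 0 < k <= b.+1) s ->
  all (fun k => k <= b) s \/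
  exists m s', [/\ 0 < m, s = nseq m b.+1 ++ s', sorted geq s' & all (fun k => 0 < k <= b) s'].
Proof.
elim: s => [|x r IH] /=; first by left.
rewrite (path_sortedE geq_tr) => /andP [hxr hr] /andP [/andP [hx0 hxb] har].
have [hxle|hxgt] := leqP x b.
  left; apply/andP; split => //.
  by apply/allP => y hy; have := allP hxr y hy => /= hyx; apply: leq_trans hyx hxle.
have hx : x = b.+1 by lia.
case: (IH hr har) => [hall|[m [s' [hm -> hs' ha']]]].
  right; exists 1, r; split => //.
  - by rewrite hx.
  - by apply/allP => y hy; have := allP har y hy; have := allP hall y hy => /=; lia.
right; exists m.+1, s'; split => //; by rewrite hx.
Qed.

Lemma mem_parts b l s : (s \in parts b l) = okp b l s.
Proof.
elim: b l s => [|b IH] l s.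
  rewrite /okp; case: l => [|l] /=; case: s => [|x s] //=; rewrite ?inE ?in_nil /= ?andbF //;
  by case: x => [|x] /=; rewrite ?andbF.
rewrite parts_S mem_cat IH; apply/idP/idP.
  case/orP => [/and3P [h1 h2 h3]|].
    rewrite /okp h1 h3 andbT /=; apply/allP => x hx; have := allP h2 x hx => /=; lia.
  case/allpairsPdep => i [s' [hi]]; rewrite IH => /and3P [h1 h2 /eqP h3] ->.
  rewrite mem_iota /= in hi.
  rewrite /okp sorted_nseq_cat //; last by apply/allP => x hx; have := allP h2 x hx => /=; lia.
  rewrite size_cat size_nseq h3 all_cat /=; apply/andP; split; last (by apply/eqP; lia); apply/andP; split.
  - by apply/allP => x /nseqP [-> _] /=.
  - by apply/allP => x hx; have := allP h2 x hx => /=; lia.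
case/and3P => h1 h2 /eqP h3.
case: (decomp h1 h2) => [hall|[m [s' [hm hs hs' ha']]]].
  by rewrite /okp h1 h3 eqxx andbT /=; apply/orP; left; apply/allP => x hx;
     have := allP h2 x hx; have := allP hall x hx => /=; lia.
apply/orP; right; apply/allpairsPdep; exists (size s'), s'; split.
- rewrite mem_iota /=; rewrite -h3 hs size_cat size_nseq; lia.
- by rewrite IH /okp hs' ha' eqxx.
- have -> : l - size s' = m by rewrite -h3 hs size_cat size_nseq; lia.
  by [].
Qed.

Lemma parts_le b l s : s \in parts b l -> all (fun k => k <= b) s.
Proof.
rewrite mem_parts => /and3P [_ h _]; apply/allP => x hx; have := allP h x hx => /=; lia.
Qed.

Lemma count_out c s : all (fun k => k <= c) s -> count_mem c.+1 s = 0.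
Proof.
move=> h; apply/eqP; rewrite -leqn0 leqNgt -has_count; apply/hasPn => x hx /=.
have := allP h x hx => /=; apply: contraL => /eqP ->; by rewrite ltnn.
Qed.

Lemma ext_mem b l s : s \in ext b l ->
  exists i s', [/\ i < l, s' \in parts b i & s = nseq (l - i) b.+1 ++ s'].
Proof.
by case/allpairsPdep => i [s' [hi hs ->]]; exists i, s'; rewrite mem_iota /= in hi.
Qed.

Lemma uniq_parts b l : uniq (parts b l).
Proof.
elim: b l => [|b IH] l; first by case: l.
rewrite parts_S cat_uniq IH /=; apply/andP; split.
  apply/hasPn => s hm; apply/negP => hs; case: (ext_mem hm) => i [s' [hi _ hs']].
  have := parts_le hs; rewrite hs' all_cat => /andP [+ _].
  have -> : l - i = (l - i - 1).+1 by lia.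
  by rewrite /= ltnn.
apply: allpairs_uniq_dep; first exact: iota_uniq.
  by move=> i _; apply: IH.
move=> [i1 s1] [i2 s2] /allpairsPdep [x1 [y1 [h1 hy1 [e1 e1']]]] /allpairsPdep [x2 [y2 [h2 hy2 [e2 e2']]]] /= E.
subst x1 x2 s1 s2.
rewrite mem_iota /= in h1; rewrite mem_iota /= in h2.
have E1 := congr1 (count_mem b.+1) E.
rewrite !count_cat !count_nseq /= eqxx !mul1n !count_out in E1.
- have ei : i1 = i2 by lia.
  subst i2.
  have := congr1 (drop (l - i1)) E; rewrite !drop_size_cat ?size_nseq // => ->.
  by [].
- exact: parts_le hy2.
- exact: parts_le hy1.
Qed.

Lemma card_tuples (a l : nat) (Q : pred (seq nat)) : (forall s, Q s -> is_partition s) ->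
 #|[set t : l.-tuple 'I_a.+1 | Q (map val t)]| = count Q (parts a l).
Proof.
move=> hQ.
rewrite cardE -size_filter.
set f := fun t : l.-tuple 'I_a.+1 => map val t.
have finj : injective f by move=> t1 t2 /(inj_map val_inj) /val_inj.
rewrite -(size_map f); apply: perm_size; apply: uniq_perm.
- by rewrite (map_inj_uniq finj) enum_uniq.
- by rewrite filter_uniq // uniq_parts.
move=> s; apply/idP/idP.
  case/mapP => t; rewrite mem_enum inE => hq ->.
  rewrite mem_filter hq mem_parts /okp.
  have := hQ _ hq => /andP [-> hp] /=.
  rewrite size_map size_tuple eqxx andbT.
  apply/allP => x hx; rewrite (allP hp x hx) /=.
  by case/mapP: hx => y _ ->; rewrite -ltnS ltn_ord.
rewrite mem_filter mem_parts => /andP [hq /and3P [_ hb /eqP hs]].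
have sz : size (map (@inord a) s) == l by rewrite size_map hs.
have -> : s = f (Tuple sz).
  rewrite /f /= -map_comp -[LHS]map_id; apply/eq_in_map => x hx /=.
  by rewrite inordK //; have := allP hb x hx => /=; lia.
by apply: map_f; rewrite mem_enum inE -[map val _]/(f (Tuple sz)) /f /= -map_comp;
   rewrite (_ : map _ s = s) //; rewrite -[RHS]map_id; apply/eq_in_map => x hx /=;
   rewrite inordK //; have := allP hb x hx => /=; lia.
Qed.

Lemma size_undup_nseq M (c : nat) t : c \notin t ->
  size (undup (nseq M c ++ t)) = (0 < M) + size (undup t).
Proof.
move=> ht; elim: M => [//|M IH].
have -> : nseq M.+1 c ++ t = c :: (nseq M c ++ t) by [].
rewrite [undup _]/= mem_cat (negbTE ht) orbF; case: M IH => [|M] IH.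
  by rewrite /= add1n.
have -> : c \in nseq M.+1 c by rewrite mem_nseq eqxx. by rewrite IH.
Qed.

Lemma rep_cat m (c : nat) (s : seq nat) : c \notin s ->
  num_repeated_sizes (nseq m c ++ s) = (1 < m) + num_repeated_sizes s.
Proof.
move=> hs; rewrite /num_repeated_sizes filter_cat filter_nseq /=.
rewrite count_cat count_nseq /= eqxx mul1n.
have -> : count_mem c s = 0.
  by apply/eqP; rewrite -leqn0 leqNgt -has_count; apply/hasPn => x hx /=;
     apply: contraNneq hs => <-.
rewrite addn0.
have -> : [seq x <- s | 1 < count_mem x (nseq m c ++ s)] = [seq x <- s | 1 < count_mem x s].
  apply: eq_in_filter => x hx; rewrite count_cat count_nseq /=.
  by case: eqP => [e|//]; move: hx hs; rewrite e => ->.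
rewrite size_undup_nseq; first by case: (ltnP 1 m) => h; [rewrite mul1n (ltnW h) | rewrite mul0n].
by rewrite mem_filter negb_and hs orbT.
Qed.

Lemma largest_le c s : all (fun k => k <= c) s -> largest_part s <= c.
Proof. by elim: s => [|x s IH] //= /andP [h1 h2]; rewrite geq_max h1 IH. Qed.

Lemma largest_cat m c s : 0 < m -> all (fun k => k <= c) s ->
  largest_part (nseq m c ++ s) = c.
Proof.
move=> hm hs; have hl := largest_le hs.
rewrite /largest_part foldr_cat.
case: m hm => [//|m] _ /=.
apply/maxn_idPl; elim: m => [//|m IH] /=; by rewrite geq_max leqnn.
Qed.

Lemma count_ext (P : pred (seq nat)) b l :
  count P (ext b l) = \sum_(i < l) count (fun s => P (nseq (l - i) b.+1 ++ s)) (parts b i).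
Proof.
rewrite /ext /= count_flatten sumnE big_map.
rewrite -(big_mkord xpredT (fun i => count (fun s => P (nseq (l - i) b.+1 ++ s)) (parts b i))).
rewrite /index_iota subn0 big_map; apply: eq_bigr => i _; by rewrite count_map.
Qed.

Definition rep := num_repeated_sizes.
Definition Cn k b i j := count (fun s => rep s + k == j) (parts b i).
Definition Gn k a l j := if a is b.+1 then count (fun s => rep s + k == j) (ext b l) else 0.

Lemma E1 k b l j : Gn k b.+1 l j = \sum_(i < l) Cn (k + (1 < l - i)) b i j.
Proof.
rewrite /Gn count_ext; apply: eq_bigr => i _; apply: eq_in_count => s hs /=.
rewrite /rep rep_cat; last by rewrite -has_pred1 has_count count_out // (parts_le hs).
set r := num_repeated_sizes s; set t := nat_of_bool (1 < l - i). rewrite (addnC t r) -addnA (addnC t k). reflexivity.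
Qed.

Lemma E2 k b l j : Cn k b.+1 l j = Cn k b l j + Gn k b.+1 l j.
Proof. by rewrite /Cn parts_S count_cat. Qed.

Lemma Cn0 k i j : Cn k 0 i j = ((i == 0) && (k == j) : nat).
Proof. case: i => [|i] //=; rewrite /Cn /= addn0 /rep /num_repeated_sizes /= add0n; reflexivity. Qed.

Lemma ext_sub a l s : s \in ext a l -> s \in parts a.+1 l.
Proof. by move=> h; rewrite parts_S mem_cat h orbT. Qed.

Lemma parts_le1 a i s : s \in parts a i -> all (fun k => k <= a.+1) s.
Proof. by move/parts_le => h; apply/allP => x hx; have := allP h x hx => /=; lia. Qed.

Lemma okp_part b l s : s \in parts b l -> is_partition s.
Proof.
rewrite mem_parts => /and3P [h1 h2 _]; apply/andP; split => //.
by apply/allP => x hx; have := allP h2 x hx => /= /andP [].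
Qed.

Lemma FD2_eq j a l n : FD2 j a.+1 l n = if n == a.+1 + l - 1 then Gn 0 a.+1 l j else 0.
Proof.
have -> : FD2 j a.+1 l n = count (fun s => [&& is_partition s, largest_part s == a.+1,
   num_parts s == l, perimeter s == n & num_repeated_sizes s == j]) (parts a.+1 l).
  by apply: card_tuples => s /andP [].
rewrite parts_S count_cat.
rewrite (@eq_in_count _ _ pred0 (parts a l)); last first.
  move=> s hs /=; have := largest_le (parts_le hs).
  by case: eqP => [->|]; rewrite ?ltnn ?andbF.
rewrite count_pred0 add0n.
case: eqP => [->|hn].
  apply: eq_in_count => s hs /=.
  have hp := ext_sub hs; rewrite mem_parts in hp.
  case/and3P: hp => h1 h2 /eqP h3.
  case: (ext_mem hs) => i [s' [hi hs' es]].
  have hl : largest_part s = a.+1 by rewrite es largest_cat ?(parts_le1 hs') //; lia.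
  rewrite (okp_part (ext_sub hs)) /perimeter /num_parts hl h3 eqxx /=.
  by rewrite !eqxx /= addn0; reflexivity.
rewrite (@eq_in_count _ _ pred0 (ext a l)); first by rewrite count_pred0.
move=> s hs /=.
have hp := ext_sub hs; rewrite mem_parts in hp.
case/and3P: hp => h1 h2 /eqP h3.
case: (ext_mem hs) => i [s' [hi hs' es]].
have hl : largest_part s = a.+1 by rewrite es largest_cat ?(parts_le1 hs') //; lia.
rewrite /perimeter /num_parts hl h3.
have -> : (a.+1 + l - 1 == n) = false by apply/eqP; lia.
by rewrite !andbF.
Qed.

Lemma Cn_l0 k b j : Cn k b 0 j = (k == j).
Proof.
elim: b => [|b IH]; first by rewrite Cn0.
by rewrite E2 IH /Gn /ext /= addn0.
Qed.

Lemma Gn_l0 k a j : Gn k a 0 j = 0.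
Proof. by case: a. Qed.

Lemma Gn_a0 k l j : Gn k 0 l j = 0.
Proof. by []. Qed.

Lemma Gn_l1 k b j : Gn k b.+1 1 j = (k == j).
Proof. by rewrite E1 big_ord1 /= addn0 Cn_l0. Qed.

Lemma Gn_a1 k l j : Gn k 1 l.+1 j = (k + (1 < l.+1) == j).
Proof.
rewrite E1 big_ord_recl /= big1 ?addn0 ?Cn0 ?subn0 ?eqxx //=.
Qed.

Lemma Dn k b m j : Gn k b.+1 m.+2 j + Cn k b m j = Gn k b.+1 m.+1 j + Cn k b m.+1 j + Cn k.+1 b m j.
Proof.
rewrite !E1 big_ord_recr /= [in RHS]big_ord_recr /=.
have -> : m.+2 - m.+1 = 1 by lia.
have -> : m.+1 - m = 1 by lia.
rewrite !addn0.
have -> : \sum_(i < m.+1) Cn (k + (1 < m.+2 - widen_ord (leqnSn m.+1) i)) b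
            (widen_ord (leqnSn m.+1) i) j = \sum_(i < m.+1) Cn k.+1 b i j.
  apply: eq_bigr => i _ /=; have := ltn_ord i => hi.
  have h : 1 < m.+2 - i by lia.
  by rewrite h addn1.
have -> : \sum_(i < m) Cn (k + (1 < m.+1 - widen_ord (leqnSn m) i)) b
            (widen_ord (leqnSn m) i) j = \sum_(i < m) Cn k.+1 b i j.
  apply: eq_bigr => i _ /=; have := ltn_ord i => hi.
  have h : 1 < m.+1 - i by lia.
  by rewrite h addn1.
rewrite big_ord_recr /=; lia.
Qed.

Lemma Gn_pred a l j : (if 0 < j then Gn 0 a l (j - 1) else 0) = Gn 1 a l j.
Proof.
case: a => [|b]; first by case: (0 < j).
case: j => [|j] /=.
  by rewrite /Gn; apply/esym/eqP; rewrite -leqn0 leqNgt -has_count; apply/hasPn => s _; rewrite addn1.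
rewrite subn1 /=; apply: eq_count => s; rewrite addn0 addn1 eqSS; reflexivity.
Qed.

Lemma FDgf_eq a l j n : FDgf a l j n = if n == a + l - 1 then Posz (Gn 0 a l j) else 0%R.
Proof.
rewrite /FDgf; case: a => [|a]; first by rewrite /=; case: ifP.
case: l => [|l]; first by rewrite Gn_l0 /=; case: ifP.
rewrite /=.
case: n => [|n] /=; first by have -> : (0 == a.+1 + l.+1 - 1) = false by apply/eqP; lia.
by rewrite FD2_eq; case: ifP.
Qed.

Import GRing.Theory.
Local Open Scope ring_scope.
Lemma sum_sel N N0 (F : 'I_N.+1 -> int) :
  \sum_(i < N.+1) (if (N - i == N0)%N then F i else 0) =
  if (N0 <= N)%N then F (inord (N - N0)) else 0.
Proof.
case: leqP => h.
  have hN : (N - N0 < N.+1)%N by rewrite ltnS leq_subr.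
  rewrite (bigD1 (inord (N - N0))) //= inordK // subKn // eqxx big1 ?addr0 //.
  move=> i /eqP hi; case: eqP => // e; exfalso; apply: hi; apply: val_inj => /=.
  rewrite inordK //; have := ltn_ord i; lia.
rewrite big1 // => i _; case: eqP => // e; exfalso; have := ltn_ord i; lia.
Qed.

Lemma sum_if n (b : bool) (F : 'I_n -> int) :
  \sum_(i < n) (if b then F i else 0) = if b then \sum_(i < n) F i else 0.
Proof. by case: b => //; rewrite big1. Qed.

Lemma psmul_add f g h a l j n :
  psmul f (psadd g h) a l j n = psmul f g a l j n + psmul f h a l j n.
Proof.
rewrite /psmul /psadd -big_split; apply: eq_bigr => i1 _.
rewrite -big_split; apply: eq_bigr => i2 _.
rewrite -big_split; apply: eq_bigr => i3 _.
rewrite -big_split; apply: eq_bigr => i4 _.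
by rewrite mulrDr.
Qed.

Lemma psmul_mono f c a0 l0 j0 n0 a l j n :
  psmul f (mono c a0 l0 j0 n0) a l j n =
  if [&& (a0 <= a)%N, (l0 <= l)%N, (j0 <= j)%N & (n0 <= n)%N]
  then f (a - a0)%N (l - l0)%N (j - j0)%N (n - n0)%N * c else 0.
Proof.
have E : forall x1 x2 x3 x4 : nat, f x1 x2 x3 x4 * mono c a0 l0 j0 n0 (a - x1)%N (l - x2)%N (j - x3)%N (n - x4)%N =
  if (n - x4 == n0)%N then (if (j - x3 == j0)%N then (if (l - x2 == l0)%N then
    (if (a - x1 == a0)%N then f x1 x2 x3 x4 * c else 0) else 0) else 0) else 0.
  move=> x1 x2 x3 x4; rewrite /mono.
  by case: (a - x1 == a0)%N; case: (l - x2 == l0)%N; case: (j - x3 == j0)%N;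
     case: (n - x4 == n0)%N; rewrite /= ?mulr0.
rewrite /psmul.
under eq_bigr => i1 _ do under eq_bigr => i2 _ do under eq_bigr => i3 _ do
  under eq_bigr => i4 _ do rewrite E.
under eq_bigr => i1 _ do under eq_bigr => i2 _ do under eq_bigr => i3 _ do
  rewrite sum_sel.
under eq_bigr => i1 _ do under eq_bigr => i2 _ do rewrite sum_if sum_sel.
under eq_bigr => i1 _ do rewrite sum_if sum_if sum_sel.
rewrite sum_if sum_if sum_if sum_sel.
case: (leqP n0 n) => h4; case: (leqP j0 j) => h3; case: (leqP l0 l) => h2;
  case: (leqP a0 a) => h1; rewrite /= ?andbF //.
by rewrite !inordK // ltnS leq_subr.
Qed.

Lemma termE (a0 l0 j0 n0 : nat) (c : int) a l j n : n0 = (a0 + l0)%N ->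
  (if [&& (a0 <= a)%N, (l0 <= l)%N, (j0 <= j)%N & (n0 <= n)%N]
   then FDgf (a - a0)%N (l - l0)%N (j - j0)%N (n - n0)%N * c else 0)
  = if (n == a + l - 1)%N then
      (if (j0 <= j)%N then Posz (Gn 0 (a - a0)%N (l - l0)%N (j - j0)%N) * c else 0) else 0.
Proof.
move=> ->; rewrite FDgf_eq.
case: (leqP a0 a) => h1; last first.
  rewrite (_ : (a - a0 = 0)%N); last by lia.
  by rewrite Gn_a0 /= mul0r; case: ifP => //; case: ifP.
case: (leqP l0 l) => h2; last first.
  rewrite (_ : (l - l0 = 0)%N); last by lia.
  by rewrite Gn_l0 /= ?andbF mul0r; case: ifP => //; case: ifP.
case: (leqP j0 j) => h3; last by rewrite /= ?andbF; case: ifP.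
rewrite /=.
have [ea|ea] := eqVneq (a - a0)%N 0%N.
  by rewrite ea Gn_a0; repeat (case: ifP => _); rewrite ?mul0r.
have [el|el] := eqVneq (l - l0)%N 0%N.
  by rewrite el Gn_l0; repeat (case: ifP => _); rewrite ?mul0r.
case: ifP => h4; [case: ifP => h5|]; case: ifP => h6; rewrite ?mul0r //; lia.
Qed.

Lemma Gn_pred_int x y j c :
  (if (0 < j)%N then Posz (Gn 0 x y (j - 1)%N) * c else 0) = Posz (Gn 1 x y j) * c.
Proof.
rewrite -Gn_pred; by case: ifP; rewrite ?mul0r.
Qed.

Ltac fin := rewrite /numer /psadd /mono /=; try lia.

Lemma recG a l j :
  Posz (Gn 0 a l j) * 1 + (Posz (Gn 0 (a - 1)%N l j) * -1 + (Posz (Gn 0 a (l - 1)%N j) * -1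
  + (Posz (Gn 0 (a - 1)%N (l - 2)%N j) * 1 + Posz (Gn 1 (a - 1)%N (l - 2)%N j) * -1)))
  = numer a l j (a + l - 1)%N.
Proof.
case: a => [|[|b]].
- rewrite !sub0n !Gn_a0; fin.
- rewrite (_ : (1 - 1 = 0)%N) // !Gn_a0.
  case: l => [|[|m]].
  + rewrite !sub0n !Gn_l0; fin.
  + rewrite (_ : (1 - 1 = 0)%N) // Gn_l1 Gn_l0.
    case: j => [|[|j]]; fin.
  + rewrite (_ : (m.+2 - 1 = m.+1)%N) // !Gn_a1.
    case: m => [|m]; case: j => [|[|j]]; fin.
- rewrite (_ : (b.+2 - 1 = b.+1)%N) //.
  case: l => [|[|m]].
  + rewrite !sub0n !Gn_l0; fin.
  + rewrite (_ : (1 - 1 = 0)%N) // (_ : (1 - 2 = 0)%N) // !Gn_l1 !Gn_l0; fin.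
  + rewrite (_ : (m.+2 - 1 = m.+1)%N) // (_ : (m.+2 - 2 = m)%N); last by lia.
    have h1 := Dn 0 b.+1 m j.
    have h2 := E2 0 b m j.
    have h3 := E2 0 b m.+1 j.
    have h4 := E2 1 b m j.
    have h5 := Dn 0 b m j.
    rewrite /numer /psadd /mono [RHS]/=; lia.
Qed.

Lemma numer0 a l j n : (n == a + l - 1)%N = false -> numer a l j n = 0.
Proof.
move=> E; rewrite /numer /psadd /mono.
have c1 : [&& a == 1%N, l == 1%N, j == 0%N & n == 1%N] = false.
  by apply/negbTE/and4P => [[/eqP ea /eqP el _ /eqP en]]; move: E; rewrite ea el en.
have c2 : [&& a == 1%N, l == 2%N, j == 0%N & n == 2%N] = false.
  by apply/negbTE/and4P => [[/eqP ea /eqP el _ /eqP en]]; move: E; rewrite ea el en.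
have c3 : [&& a == 1%N, l == 2%N, j == 1%N & n == 2%N] = false.
  by apply/negbTE/and4P => [[/eqP ea /eqP el _ /eqP en]]; move: E; rewrite ea el en.
by rewrite c1 c2 c3 !addr0.
Qed.

Theorem mainTheorem2 :
  forall a l j n : nat, psmul FDgf denom a l j n = numer a l j n.
Proof.
move=> a l j n.
rewrite /denom !psmul_add !psmul_mono !termE //.
rewrite !subn0 Gn_pred_int.
case E: (n == a + l - 1)%N.
  move/eqP: E => ->; rewrite -recG FDgf_eq eqxx !leq0n; reflexivity.
by rewrite numer0 // FDgf_eq E !leq0n /= mul0r !addr0.
Qed.
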